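(* For $R_1,R_2\in\mathrm{DGRings}^{0,-1}$, the inclusion functor $\mathrm{Corr}_{\mathrm{adm}}(R_1,R_2)\hookrightarrow\mathrm{Corr}_{\mathrm{ana}}(R_1,R_2)$ has a left adjoint $\mathrm{Adm}:\mathrm{Corr}_{\mathrm{ana}}(R_1,R_2)\to\mathrm{Corr}_{\mathrm{adm}}(R_1,R_2)$.
   Context: Rings are commutative and unital. $\mathrm{DGRings}^{0,-1}$ is the category of commutative DG rings $R$ with $R^i=0$ for $i\ne 0,-1$. Equivalently, such $R$ is a ring $R^0$, an $R^0$-module $R^{-1}$ and an $R^0$-linear $d:R^{-1}\to R^0$ with $d(x)y=d(y)x$. Quasi-isomorphisms are morphisms inducing isomorphisms on $\ker d$ and $\operatorname{coker} d$. A correspondence from $R_1$ to $R_2$ is a diagram $R_1\xleftarrow{f}R_{12}\xrightarrow{g}R_2$ in $\mathrm{DGRings}^{0,-1}$. Morphisms of correspondences are maps $h$ of the middle terms with $f'h=f$, $g'h=g$. A correspondence is admissible if $f$ is a quasi-isomorphism and $R_{12}^{-1}\to R_1^{-1}\times R_2^{-1}$ is an isomorphism. It is an anamorphism if $f$ is a surjective quasi-isomorphism. $\mathrm{Corr}_{\mathrm{adm}}\subset\mathrm{Corr}_{\mathrm{ana}}$ are the corresponding full subcategories of the category of correspondences. *)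

(* Defs.v *)
From HB Require Import structures.
From mathcomp Require Import all_boot all_order all_algebra.
Set Implicit Arguments. Unset Strict Implicit. Unset Printing Implicit Defensive.
Import GRing.Theory.
Local Open Scope ring_scope.

(* A commutative DG ring concentrated in degrees 0 and -1:
   a commutative unital ring dg0 = R^0, an R^0-module dg1 = R^{-1},
   and an R^0-linear d : R^{-1} -> R^0 with d(x) y = d(y) x. *)
Record DGR := DGRing {
  dg0 : comPzRingType;
  dg1 : lmodType dg0;
  dgd : dg1 -> dg0;
  dgd_lin : forall (a : dg0) (x y : dg1), dgd (a *: x + y) = a * dgd x + dgd y;
  dgd_comm : forall x y : dg1, dgd x *: y = dgd y *: x }.

Record DGHom (A B : DGR) := DGHomMk {
  hm0 : {rmorphism dg0 A -> dg0 B};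
  hm1 : dg1 A -> dg1 B;
  hm1_lin : forall (a : dg0 A) (x y : dg1 A),
      hm1 (a *: x + y) = hm0 a *: hm1 x + hm1 y;
  hm_d : forall x : dg1 A, @dgd B (hm1 x) = hm0 (@dgd A x) }.

Definition dghom_comp_eq (A B C : DGR) (g : DGHom B C) (f : DGHom A B)
    (h : DGHom A C) : Prop :=
  (forall a, hm0 g (hm0 f a) = hm0 h a) /\ (forall x, hm1 g (hm1 f x) = hm1 h x).

Definition dghom_eq (A B : DGR) (f g : DGHom A B) : Prop :=
  (forall a, hm0 f a = hm0 g a) /\ (forall x, hm1 f x = hm1 g x).

(* f induces an isomorphism on H^{-1} = ker d *)
Definition iso_on_H1 (A B : DGR) (f : DGHom A B) : Prop :=
  (forall x : dg1 A, @dgd A x = 0 -> hm1 f x = 0 -> x = 0) /\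
  (forall y : dg1 B, @dgd B y = 0 -> exists x : dg1 A, @dgd A x = 0 /\ hm1 f x = y).

(* f induces an isomorphism on H^0 = coker d *)
Definition iso_on_H0 (A B : DGR) (f : DGHom A B) : Prop :=
  (forall a : dg0 A, (exists y : dg1 B, hm0 f a = @dgd B y) ->
                      exists x : dg1 A, a = @dgd A x) /\
  (forall b : dg0 B, exists a : dg0 A, exists y : dg1 B, b - hm0 f a = @dgd B y).

Definition quasi_iso (A B : DGR) (f : DGHom A B) : Prop :=
  iso_on_H1 f /\ iso_on_H0 f.

Definition dg_surjective (A B : DGR) (f : DGHom A B) : Prop :=
  (forall b : dg0 B, exists a, hm0 f a = b) /\
  (forall y : dg1 B, exists x, hm1 f x = y).

Record Corr (R1 R2 : DGR) := CorrMk {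
  cmid : DGR;
  cf : DGHom cmid R1;
  cg : DGHom cmid R2 }.

Record CorrHom (R1 R2 : DGR) (C D : Corr R1 R2) := CorrHomMk {
  ch : DGHom (cmid C) (cmid D);
  ch_f : dghom_comp_eq (cf D) ch (cf C);
  ch_g : dghom_comp_eq (cg D) ch (cg C) }.

Definition corrhom_comp_eq (R1 R2 : DGR) (C D E : Corr R1 R2)
    (k : CorrHom D E) (e : CorrHom C D) (h : CorrHom C E) : Prop :=
  dghom_comp_eq (ch k) (ch e) (ch h).

Definition corrhom_eq (R1 R2 : DGR) (C D : Corr R1 R2) (h k : CorrHom C D) : Prop :=
  dghom_eq (ch h) (ch k).

Definition is_admissible (R1 R2 : DGR) (C : Corr R1 R2) : Prop :=
  quasi_iso (cf C) /\
  bijective (fun x : dg1 (cmid C) => (hm1 (cf C) x, hm1 (cg C) x)).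

Definition is_anamorphism (R1 R2 : DGR) (C : Corr R1 R2) : Prop :=
  quasi_iso (cf C) /\ dg_surjective (cf C).

(* Main.v *)
From HB Require Import structures.
Require Import Defs.
From mathcomp Require Import all_boot all_order all_algebra.
From mathcomp Require Import boolp generic_quotient ring_quotient.
From mathcomp Require Import ring.
Set Implicit Arguments. Unset Strict Implicit. Unset Printing Implicit Defensive.
Import GRing.Theory.
Local Open Scope ring_scope.
Local Open Scope quotient_scope.

Section DGLemmas.
Variable A : DGR.
Lemma dgdD (x y : dg1 A) : dgd (x + y) = dgd x + dgd y.
Proof. by rewrite -[x]scale1r dgd_lin mul1r scale1r. Qed.
Lemma dgd0 : @dgd A 0 = 0.
Proof. by apply: (addrI (dgd (0 : dg1 A))); rewrite -dgdD !addr0. Qed.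
Lemma dgdZ a (x : dg1 A) : dgd (a *: x) = a * dgd x.
Proof. by rewrite -[a *: x]addr0 dgd_lin dgd0 addr0. Qed.
Lemma dgdN (x : dg1 A) : dgd (- x) = - dgd x.
Proof. by rewrite -scaleN1r dgdZ mulN1r. Qed.
Lemma dgdB (x y : dg1 A) : dgd (x - y) = dgd x - dgd y.
Proof. by rewrite dgdD dgdN. Qed.
End DGLemmas.

Section HomLemmas.
Variables (A B : DGR) (h : DGHom A B).
Lemma hm1D x y : hm1 h (x + y) = hm1 h x + hm1 h y.
Proof. by rewrite -[x]scale1r hm1_lin rmorph1 !scale1r. Qed.
Lemma hm10 : hm1 h 0 = 0.
Proof. by apply: (addrI (hm1 h 0)); rewrite -hm1D !addr0. Qed.
Lemma hm1Z a x : hm1 h (a *: x) = hm0 h a *: hm1 h x.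
Proof. by rewrite -[a *: x]addr0 hm1_lin hm10 addr0. Qed.
Lemma hm1N x : hm1 h (- x) = - hm1 h x.
Proof. by rewrite -scaleN1r hm1Z rmorphN1 scaleN1r. Qed.
Lemma hm1B x y : hm1 h (x - y) = hm1 h x - hm1 h y.
Proof. by rewrite hm1D hm1N. Qed.
End HomLemmas.

Ltac front a r :=
  match r with
  | ?x + ?r' => constr:(ltac:(unify x a; exact (@erefl _ r)) : r = a + r')
  | ?x + ?r' => let p := front a r' in
       constr:(etrans (congr1 (fun z => x + z) p) (addrCA x a _))
  | _ => constr:(ltac:(unify r a; exact (esym (addr0 a))) : r = a + 0)
  end.

Ltac ac_eq :=
  rewrite -?addrA;
  repeat lazymatch goal with
  | |- ?a + ?l = ?r => let p := front a r in apply: (etrans _ (esym p)); congr (a + _)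
  end; rewrite ?addr0 ?add0r; try reflexivity.

Ltac zero_sum :=
  rewrite -?addrA;
  repeat match goal with
  | |- - ?b + ?r = 0 => let p := front b r in
        apply: (etrans (congr1 (fun z => - b + z) p)); rewrite addKr
  | |- ?a + ?r = 0 => let p := front (- a) r in
        apply: (etrans (congr1 (fun z => a + z) p)); rewrite addNKr
  end; rewrite ?addr0 ?subrr; try reflexivity.

Ltac lin_eq := apply/eqP; rewrite -subr_eq0; apply/eqP;
  rewrite ?opprD ?opprK ?scalerN ?scaleNr ?opprK; zero_sum.


Section BRing.
Variables (R2 M : DGR) (g : DGHom M R2).

Definition Bt (_ : DGHom M R2) : Type := (dg0 M * dg1 R2)%type.
HB.instance Definition _ := GRing.Zmodule.on (Bt g).

Definition Bmul (u v : Bt g) : Bt g :=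
  (u.1 * v.1, hm0 g u.1 *: v.2 + hm0 g v.1 *: u.2 + dgd u.2 *: v.2).
Definition Bone : Bt g := (1, 0).

Lemma BmulA : associative Bmul.
Proof.
move=> [a y] [a' y'] [a'' y'']; rewrite /Bmul /=; congr (_, _); first by rewrite mulrA.
rewrite !dgdD !dgdZ !rmorphM !scalerDr !scalerDl !scalerA.
set ga := hm0 g a; set ga' := hm0 g a'; set ga'' := hm0 g a''.
rewrite [ga'' * ga]mulrC [ga'' * ga']mulrC [ga''*dgd y]mulrC [ga' * dgd y]mulrC.
ac_eq.
Qed.

Lemma BmulC : commutative Bmul.
Proof.
move=> [a y] [a' y']; rewrite /Bmul /=; congr (_, _); first by rewrite mulrC.
by congr (_ + _); [exact: addrC | exact: dgd_comm].
Qed.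

Lemma Bmul1 : left_id Bone Bmul.
Proof.
move=> [a y]; rewrite /Bmul /=; congr (_, _); first by rewrite mul1r.
by rewrite rmorph1 scale1r scaler0 dgd0 scale0r !addr0.
Qed.

Lemma BmulDl : left_distributive Bmul +%R.
Proof.
move=> [a y] [a' y'] [a'' y'']; rewrite /Bmul /=; congr (_, _); first by rewrite mulrDl.
rewrite rmorphD !scalerDl !scalerDr dgdD scalerDl.
rewrite /=; ac_eq.
Qed.

HB.instance Definition _ := GRing.Zmodule_isComPzRing.Build (Bt g) BmulA BmulC Bmul1 BmulDl.

Lemma BmulE (u v : Bt g) : u * v = Bmul u v. Proof. by []. Qed.
Lemma B1E : (1 : Bt g) = (1, 0). Proof. by []. Qed.
End BRing.

Section AQuot.
Variables (R1 R2 M : DGR) (f : DGHom M R1) (g : DGHom M R2).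

Definition Jprop (u : Bt g) := exists k : dg1 M, hm1 f k = 0 /\ u = (dgd k, - hm1 g k).
Definition Jp : {pred Bt g} := fun u => `[< Jprop u >].

Lemma JpP u : reflect (Jprop u) (u \in Jp).
Proof. exact: asboolP. Qed.

Lemma Jp_closed : zmod_closed Jp.
Proof.
split.
  apply/JpP; exists 0; rewrite hm10 dgd0 hm10 oppr0; split => //.
move=> u v /JpP [k [fk ->]] /JpP [k' [fk' ->]]; apply/JpP; exists (k - k').
rewrite hm1B fk fk' subrr dgdB hm1B; split => //.
by rewrite opprB; congr (_, _) => /=; rewrite opprK addrC.
Qed.

HB.instance Definition _ := GRing.isZmodClosed.Build (Bt g) Jp Jp_closed.

Definition Aq := Quotient.quot Jp.
HB.instance Definition _ : EqQuotient (Bt g) (Quotient.equiv Jp) Aq := EqQuotient.on Aq.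
HB.instance Definition _ := Choice.on Aq.
HB.instance Definition _ := GRing.Zmodule.on Aq.
HB.instance Definition _ := ZmodQuotient.on Aq.

Lemma Jp_ideal (a u : Bt g) : u \in Jp -> a * u \in Jp.
Proof.
case: a => b z /JpP [k [fk ->]]; apply/JpP; exists (b *: k).
rewrite hm1Z fk scaler0; split => //.
rewrite BmulE /Bmul /=; congr (_, _); first by rewrite dgdZ.
rewrite hm1Z -hm_d dgd_comm !scalerN.
by rewrite -addrA subrr addr0.
Qed.

Definition Aone : Aq := lift_cst Aq 1.
Definition Amul := lift_op2 Aq *%R.
Canonical pi_one_morph := PiConst Aone.

Lemma piE' (u v : Bt g) : (\pi_Aq u = \pi_Aq v) <-> (u - v \in Jp).
Proof.
split; first by move/eqP; rewrite piE.
by move=> h; apply/eqP; rewrite piE.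
Qed.

Lemma pi_mul : {morph \pi_Aq : x y / x * y >-> Amul x y}.
Proof.
move=> x y; unlock Amul; apply/piE'.
have hx : repr (\pi_Aq x) - x \in Jp by apply/piE'; rewrite reprK.
have hy : repr (\pi_Aq y) - y \in Jp by apply/piE'; rewrite reprK.
have -> : x * y - repr (\pi_Aq x) * repr (\pi_Aq y) =
  - (x * (repr (\pi_Aq y) - y) + repr (\pi_Aq y) * (repr (\pi_Aq x) - x)).
  by ring.
by rewrite rpredN rpredD // Jp_ideal.
Qed.
Canonical pi_mul_morph := PiMorph2 pi_mul.

Lemma piD (x y : Bt g) : \pi_Aq (x + y) = \pi_Aq x + \pi_Aq y.
Proof. exact: pi_addr. Qed.

Lemma AmulA: associative Amul.
Proof. by move=> x y z; rewrite -[x]reprK -[y]reprK -[z]reprK !piE mulrA. Qed.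
Lemma AmulC: commutative Amul.
Proof. by move=> x y; rewrite -[x]reprK -[y]reprK !piE mulrC. Qed.
Lemma Amul1: left_id Aone Amul.
Proof. by move=> x; rewrite -[x]reprK !piE mul1r. Qed.
Lemma AmulDl: left_distributive Amul +%R.
Proof.
move=> x y z; rewrite -[x]reprK -[y]reprK -[z]reprK.
by rewrite -piD -!pi_mul mulrDl piD.
Qed.

HB.instance Definition _ := GRing.Zmodule_isComPzRing.Build Aq AmulA AmulC Amul1 AmulDl.

Lemma piM (x y : Bt g) : \pi_Aq (x * y) = \pi_Aq x * \pi_Aq y.
Proof. exact: pi_mul. Qed.
Lemma pi1 : \pi_Aq (1 : Bt g) = 1.
Proof. by rewrite piE. Qed.
Lemma piN (x : Bt g) : \pi_Aq (- x) = - \pi_Aq x.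
Proof. exact: pi_oppr. Qed.
Lemma pi0 : \pi_Aq (0 : Bt g) = 0.
Proof. exact: pi_zeror. Qed.
End AQuot.

Section AMaps.
Variables (R1 R2 M : DGR) (f : DGHom M R1) (g : DGHom M R2).
Local Notation A0 := (Aq f g).
Local Notation pi := (\pi_(Aq f g)).

Lemma piJP (u v : Bt g) : pi u = pi v -> exists k, hm1 f k = 0 /\ u - v = (dgd k, - hm1 g k).
Proof. by move/piE' /JpP. Qed.

Lemma piJ (u v : Bt g) k : hm1 f k = 0 -> u - v = (dgd k, - hm1 g k) -> pi u = pi v.
Proof. by move=> fk e; apply/piE'; apply/JpP; exists k. Qed.

Definition fA0 (q : A0) : dg0 R1 := hm0 f (repr q).1.
Definition gA0 (q : A0) : dg0 R2 := hm0 g (repr q).1 + dgd (repr q).2.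

Lemma fA0_pi u : fA0 (pi u) = hm0 f u.1.
Proof.
rewrite /fA0; have [k [fk e]] := piJP (reprK (pi u)).
apply/eqP; rewrite -subr_eq0 -rmorphB.
have -> : (repr (pi u)).1 - u.1 = (repr (pi u) - u).1 by [].
by rewrite e /= -hm_d fk dgd0.
Qed.

Lemma gA0_pi u : gA0 (pi u) = hm0 g u.1 + dgd u.2.
Proof.
rewrite /gA0; have [k [fk e]] := piJP (reprK (pi u)).
apply/eqP; rewrite -subr_eq0 opprD addrACA -rmorphB -dgdB.
have -> : (repr (pi u)).1 - u.1 = (repr (pi u) - u).1 by [].
have -> : (repr (pi u)).2 - u.2 = (repr (pi u) - u).2 by [].
by rewrite e /= -hm_d dgdN subrr.
Qed.

Lemma fA0_zmod : zmod_morphism fA0.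
Proof.
move=> x y; rewrite -[x]reprK -[y]reprK -piN -piD !fA0_pi /=.
by rewrite rmorphB.
Qed.
Lemma fA0_mon : monoid_morphism fA0.
Proof.
split; first by rewrite -pi1 fA0_pi /= rmorph1.
move=> x y; rewrite -[x]reprK -[y]reprK -piM !fA0_pi /=.
by rewrite rmorphM.
Qed.
HB.instance Definition _ := GRing.isZmodMorphism.Build A0 (dg0 R1) fA0 fA0_zmod.
HB.instance Definition _ := GRing.isMonoidMorphism.Build A0 (dg0 R1) fA0 fA0_mon.

Lemma gA0_zmod : zmod_morphism gA0.
Proof.
move=> x y; rewrite -[x]reprK -[y]reprK -piN -piD !gA0_pi /=.
by rewrite rmorphB dgdB; ring.
Qed.
Lemma gA0_mon : monoid_morphism gA0.
Proof.
split; first by rewrite -pi1 gA0_pi /= rmorph1 dgd0 addr0.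
move=> x y; rewrite -[x]reprK -[y]reprK -piM !gA0_pi /=.
rewrite rmorphM !dgdD !dgdZ. 
set a := repr x; set b := repr y.
ring.
Qed.
HB.instance Definition _ := GRing.isZmodMorphism.Build A0 (dg0 R2) gA0 gA0_zmod.
HB.instance Definition _ := GRing.isMonoidMorphism.Build A0 (dg0 R2) gA0 gA0_mon.
End AMaps.

Section AMod.
Variables (R1 R2 M : DGR) (f : DGHom M R1) (g : DGHom M R2).
Local Notation A0 := (Aq f g).
Local Notation pi := (\pi_(Aq f g)).

Definition At1 (_ : DGHom M R1) (_ : DGHom M R2) : Type := (dg1 R1 * dg1 R2)%type.
HB.instance Definition _ := GRing.Zmodule.on (At1 f g).

Definition Ascale (q : A0) (u : At1 f g) : At1 f g := (fA0 q *: u.1, gA0 q *: u.2).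

Lemma AscaleA a b v : Ascale a (Ascale b v) = Ascale (a * b) v.
Proof. by rewrite /Ascale /= !rmorphM !scalerA. Qed.
Lemma Ascale1 : left_id 1 Ascale.
Proof. by move=> [x y]; rewrite /Ascale /= !rmorph1 !scale1r. Qed.
Lemma AscaleDr : right_distributive Ascale +%R.
Proof. by move=> a [x y] [x' y']; rewrite /Ascale /= !scalerDr. Qed.
Lemma AscaleDl v : {morph Ascale^~ v: a b / a + b}.
Proof. by move=> a b; rewrite /Ascale /= !rmorphD !scalerDl. Qed.

HB.instance Definition _ := GRing.Zmodule_isLmodule.Build A0 (At1 f g)
  AscaleA Ascale1 AscaleDr AscaleDl.

Lemma AscaleE (q : A0) (u : At1 f g) : q *: u = (fA0 q *: u.1, gA0 q *: u.2).
Proof. by []. Qed.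

Variable s : dg1 R1 -> dg1 M.
Hypothesis sK : forall x, hm1 f (s x) = x.

Definition dA (u : At1 f g) : A0 := pi (dgd (s u.1), u.2 - hm1 g (s u.1)).

Lemma fA0_dA u : fA0 (dA u) = dgd u.1.
Proof. by rewrite fA0_pi /= -hm_d sK. Qed.

Lemma gA0_dA u : gA0 (dA u) = dgd u.2.
Proof. by rewrite gA0_pi /= dgdB hm_d addrC subrK. Qed.

Lemma dA_lin (a : A0) (u v : At1 f g) : dA (a *: u + v) = a * dA u + dA v.
Proof.
rewrite -[a]reprK; set b := repr a.
rewrite /dA -piM -piD AscaleE fA0_pi gA0_pi /=.
set W := hm0 f b.1 *: u.1 + v.1.
apply: (piJ (k := s W - (b.1 *: s u.1 + s v.1))).
  by rewrite hm1B hm1D hm1Z !sK subrr.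
rewrite BmulE /Bmul /=; congr (_, _) => /=.
  rewrite !dgdB !dgdD !dgdZ; ring.
rewrite -hm_d dgd_comm !hm1B !hm1D !hm1Z !scalerBr !scalerDl.
lin_eq.
Qed.

Lemma dA_comm (u v : At1 f g) : dA u *: v = dA v *: u.
Proof. by rewrite !AscaleE !fA0_dA !gA0_dA dgd_comm [dgd u.2 *: _]dgd_comm. Qed.

Definition ADG : DGR := @DGRing A0 (At1 f g) dA dA_lin dA_comm.

Lemma fA_lin (a : dg0 ADG) (x y : dg1 ADG) :
  (a *: x + y).1 = (fA0 a : dg0 R1) *: x.1 + y.1.
Proof. by []. Qed.
Lemma fA_d (x : dg1 ADG) : dgd x.1 = fA0 (@dgd ADG x).
Proof. by rewrite /= fA0_dA. Qed.
Definition fA0m : {rmorphism dg0 ADG -> dg0 R1} := fA0 (f:=f) (g:=g).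
Definition fA : DGHom ADG R1 := @DGHomMk ADG R1 fA0m (fun x => x.1) fA_lin fA_d.

Lemma gA_lin (a : dg0 ADG) (x y : dg1 ADG) :
  (a *: x + y).2 = (gA0 a : dg0 R2) *: x.2 + y.2.
Proof. by []. Qed.
Lemma gA_d (x : dg1 ADG) : dgd x.2 = gA0 (@dgd ADG x).
Proof. by rewrite /= gA0_dA. Qed.
Definition gA0m : {rmorphism dg0 ADG -> dg0 R2} := gA0 (f:=f) (g:=g).
Definition gA : DGHom ADG R2 := @DGHomMk ADG R2 gA0m (fun x => x.2) gA_lin gA_d.

Definition eta0 (a : dg0 M) : A0 := pi (a, 0).
Lemma eta0_zmod : zmod_morphism eta0.
Proof. by move=> x y; rewrite /eta0 -piN -piD /=; congr pi; congr (_, _) => /=; rewrite subr0. Qed.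
Lemma eta0_mon : monoid_morphism eta0.
Proof.
split; first by rewrite /eta0 -pi1.
move=> x y; rewrite /eta0 -piM BmulE /Bmul /=.
by rewrite !scaler0 !addr0.
Qed.
HB.instance Definition _ := GRing.isZmodMorphism.Build (dg0 M) A0 eta0 eta0_zmod.
HB.instance Definition _ := GRing.isMonoidMorphism.Build (dg0 M) A0 eta0 eta0_mon.
Definition eta0m : {rmorphism dg0 M -> dg0 ADG} := eta0.

Definition eta1 (x : dg1 M) : dg1 ADG := (hm1 f x, hm1 g x).
Lemma eta_lin (a : dg0 M) (x y : dg1 M) : eta1 (a *: x + y) = eta0m a *: eta1 x + eta1 y.
Proof.
rewrite /eta1 /= AscaleE /eta0m /= fA0_pi gA0_pi /= dgd0 addr0.
by rewrite !hm1D !hm1Z.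
Qed.
Lemma eta_d (x : dg1 M) : @dgd ADG (eta1 x) = eta0m (dgd x).
Proof.
rewrite /= /dA /eta1 /eta0m /= /eta0.
apply: (piJ (k := s (hm1 f x) - x)); first by rewrite hm1B sK subrr.
congr (_, _) => /=; first by rewrite dgdB.
by rewrite subr0 hm1B opprB.
Qed.
Definition eta : DGHom M ADG := @DGHomMk M ADG eta0m eta1 eta_lin eta_d.
End AMod.

Section Univ.
Variables (R1 R2 M : DGR) (f : DGHom M R1) (g : DGHom M R2).
Variable s : dg1 R1 -> dg1 M.
Hypothesis sK : forall x, hm1 f (s x) = x.
Local Notation A0 := (Aq f g).
Local Notation pi := (\pi_(Aq f g)).

Lemma pi_split (b : Bt g) : pi b = eta0 f g b.1 + dA s (0, b.2).
Proof.
rewrite /eta0 /dA -piD; apply: (piJ (k := - s 0)).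
  by rewrite hm1N sK oppr0.
case: b => b1 b2; congr (_, _) => /=.
  by rewrite dgdN opprD addrA subrr add0r.
by rewrite hm1N opprK add0r opprB addrC subrK.
Qed.

Hypothesis H1i : forall k : dg1 M, dgd k = 0 -> hm1 f k = 0 -> k = 0.
Hypothesis H1s : forall y : dg1 R1, dgd y = 0 -> exists x : dg1 M, dgd x = 0 /\ hm1 f x = y.
Hypothesis H0i : forall a : dg0 M, (exists y : dg1 R1, hm0 f a = dgd y) -> exists x : dg1 M, a = dgd x.
Hypothesis sur0 : forall b : dg0 R1, exists a, hm0 f a = b.

Lemma fA_quasi : quasi_iso (fA g sK).
Proof.
split; split.
- move=> [x1 x2] /= dx x10; move: dx; rewrite x10 /= -pi0.
  rewrite /dA /= => H; have [k [fk e]] := piJP H.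
  have e1 := congr1 fst e; have e2 := congr1 snd e; move: e1 e2 => /= e1 e2.
  rewrite subr0 in e1; rewrite subr0 in e2.
  have ks : s 0 - k = 0 by apply: H1i; rewrite ?dgdB ?e1 ?subrr // hm1B fk sK subrr.
  move/eqP: ks; rewrite subr_eq0 => /eqP ks.
  by move: e2; rewrite ks => /eqP; rewrite subr_eq addrC subrr => /eqP ->.
- move=> y /= dy; have [m [dm fm]] := H1s dy.
  exists (eta1 g sK m); split; last by [].
  by move: (eta_d g sK m) => /= ->; rewrite dm rmorph0.
- move=> a [y /= ey]; move: ey; rewrite -[a]reprK; set b := repr a.
  rewrite fA0_pi => ey.
  have [m em] := H0i (ex_intro _ y ey).
  exists (hm1 f m, hm1 g m + b.2); rewrite /= /dA /=.
  apply: esym; apply: (piJ (k := s (hm1 f m) - m)); first by rewrite hm1B sK subrr.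
  congr (_, _) => /=; first by rewrite em dgdB.
  rewrite hm1B opprB; lin_eq.
- move=> b; have [m fm] := sur0 b.
  exists (eta0 f g m), 0; rewrite /= dgd0.
  by rewrite /eta0 fA0_pi /= fm subrr.
Qed.
End Univ.

Section Univ2.
Variables (R1 R2 M : DGR) (f : DGHom M R1) (g : DGHom M R2).
Variable s : dg1 R1 -> dg1 M.
Hypothesis sK : forall x, hm1 f (s x) = x.
Local Notation A0 := (Aq f g).
Local Notation pi := (\pi_(Aq f g)).
Variables (N : DGR) (fD : DGHom N R1) (gD : DGHom N R2) (hh : DGHom M N).
Hypothesis hf0 : forall a, hm0 fD (hm0 hh a) = hm0 f a.
Hypothesis hf1 : forall x, hm1 fD (hm1 hh x) = hm1 f x.
Hypothesis hg0 : forall a, hm0 gD (hm0 hh a) = hm0 g a.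
Hypothesis hg1 : forall x, hm1 gD (hm1 hh x) = hm1 g x.
Variable psi : (dg1 R1 * dg1 R2)%type -> dg1 N.
Hypothesis phiK : forall w, psi (hm1 fD w, hm1 gD w) = w.
Hypothesis psiK : forall p, (hm1 fD (psi p), hm1 gD (psi p)) = p.

Lemma psi_eq w p : hm1 fD w = p.1 -> hm1 gD w = p.2 -> psi p = w.
Proof. by case: p => p1 p2 /= <- <-. Qed.
Lemma fD_psi p : hm1 fD (psi p) = p.1.
Proof. by rewrite -[in RHS](psiK p). Qed.
Lemma gD_psi p : hm1 gD (psi p) = p.2.
Proof. by rewrite -[in RHS](psiK p). Qed.
Lemma psiD p q : psi (p + q) = psi p + psi q.
Proof. by apply: psi_eq; rewrite hm1D ?fD_psi ?gD_psi. Qed.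
Lemma psi00 : psi (0, 0) = 0.
Proof. by apply: psi_eq; rewrite hm10. Qed.
Lemma psi0D a b : psi (0, a + b) = psi (0, a) + psi (0, b).
Proof. by apply: psi_eq; rewrite hm1D ?fD_psi ?gD_psi //= addr0. Qed.
Lemma psi0N a : psi (0, - a) = - psi (0, a).
Proof. by apply: psi_eq; rewrite hm1N ?fD_psi ?gD_psi //= oppr0. Qed.
Lemma psi0Z e y : psi (0, hm0 gD e *: y) = e *: psi (0, y).
Proof. by apply: psi_eq; rewrite hm1Z ?fD_psi ?gD_psi //= scaler0. Qed.
Lemma psi_hh x : psi (hm1 f x, hm1 g x) = hm1 hh x.
Proof. by apply: psi_eq; rewrite ?hf1 ?hg1. Qed.

Definition h0 (q : A0) : dg0 N := hm0 hh (repr q).1 + dgd (psi (0, (repr q).2)).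

Lemma h0_pi u : h0 (pi u) = hm0 hh u.1 + dgd (psi (0, u.2)).
Proof.
rewrite /h0; have [k [fk e]] := piJP (reprK (pi u)).
move/eqP: e; rewrite subr_eq => /eqP ->.
case: u => u1 u2 /=; rewrite psi0D.
have -> : psi (0, - hm1 g k) = - hm1 hh k.
  by apply: psi_eq; rewrite hm1N ?hf1 ?hg1 ?fk ?oppr0.
rewrite rmorphD dgdD dgdN -hm_d; ring.
Qed.

Lemma h0_zmod : zmod_morphism h0.
Proof.
move=> x y; rewrite -[x]reprK -[y]reprK -piN -piD !h0_pi /=.
rewrite rmorphB psi0D psi0N dgdD dgdN; ring.
Qed.
Lemma h0_mon : monoid_morphism h0.
Proof.
split; first by rewrite -pi1 h0_pi /= rmorph1 psi00 dgd0 addr0.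
move=> x y; rewrite -[x]reprK -[y]reprK -piM !h0_pi /=.
set a := repr x; set b := repr y.
rewrite rmorphM !psi0D -!hg0 !psi0Z.
have -> : dgd a.2 = hm0 gD (dgd (psi (0, a.2))) by rewrite -hm_d gD_psi.
rewrite psi0Z !dgdD !dgdZ; ring.
Qed.
HB.instance Definition _ := GRing.isZmodMorphism.Build A0 (dg0 N) h0 h0_zmod.
HB.instance Definition _ := GRing.isMonoidMorphism.Build A0 (dg0 N) h0 h0_mon.

Lemma fD_h0 q : hm0 fD (h0 q) = fA0 q.
Proof.
rewrite -[q]reprK h0_pi fA0_pi rmorphD hf0 -hm_d fD_psi /= dgd0 addr0 //.
Qed.
Lemma gD_h0 q : hm0 gD (h0 q) = gA0 q.
Proof.
by rewrite -[q]reprK h0_pi gA0_pi rmorphD hg0 -hm_d gD_psi.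
Qed.

Definition h0m : {rmorphism dg0 (ADG g sK) -> dg0 N} := h0.

Lemma h_lin (a : dg0 (ADG g sK)) (x y : dg1 (ADG g sK)) :
  psi (a *: x + y) = h0m a *: psi x + psi y.
Proof.
apply: psi_eq; rewrite hm1D hm1Z /h0m /= ?fD_psi ?gD_psi; congr (_ *: _ + _); [exact: fD_h0 | exact: gD_h0].
Qed.

Lemma h_d (x : dg1 (ADG g sK)) : dgd (psi x) = h0m (dgd x).
Proof.
rewrite /h0m /= /dA h0_pi /= -hm_d -psi_hh sK -dgdD -psiD.
by case: x => x1 x2; congr (dgd (psi (_, _))) => /=; rewrite ?addr0 // addrC subrK.
Qed.

Definition hD : DGHom (ADG g sK) N := @DGHomMk (ADG g sK) N h0m psi h_lin h_d.
End Univ2.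

Close Scope quotient_scope.
Close Scope ring_scope.

Theorem proposition4p3p1 (R1 R2 : DGR) (C : Corr R1 R2) :
  is_anamorphism C ->
  exists (A : Corr R1 R2) (eta : CorrHom C A),
    is_admissible A /\
    forall (D : Corr R1 R2) (h : CorrHom C D), is_admissible D ->
      exists h' : CorrHom A D,
        corrhom_comp_eq h' eta h /\
        forall h'' : CorrHom A D, corrhom_comp_eq h'' eta h -> corrhom_eq h'' h'.
Proof.
case: C => M f g [[[H1i H1s] [H0i H0s]] [sur0 sur1]] /=.
have [s sK] : {s : dg1 R1 -> dg1 M | forall x, hm1 f (s x) = x}.
  by exists (fun y => sval (cid (sur1 y))) => y; case: cid.
have etaf : dghom_comp_eq (fA g sK) (eta g sK) f.
  by split => [a|x] //=; rewrite /eta0 fA0_pi.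
have etag : dghom_comp_eq (gA g sK) (eta g sK) g.
  by split => [a|x] //=; rewrite /eta0 gA0_pi /= dgd0 addr0.
pose A := CorrMk (fA g sK) (gA g sK).
exists A, (@CorrHomMk _ _ (CorrMk f g) A (eta g sK) etaf etag).
split.
  split; first exact: (fA_quasi g sK H1i H1s H0i sur0).
  by exists (fun p : dg1 R1 * dg1 R2 => (p.1, p.2) : dg1 (ADG g sK)) => [[]|[]].
move=> D h [_ bij]; case: D h bij => N fD gD h bij /=.
case: bij => /= psi phiK psiK.
case: h => /= hh [hf0 hf1] [hg0 hg1].
pose hD' := hD sK hf0 hf1 hg0 hg1 phiK psiK.
have hDf : dghom_comp_eq fD hD' (fA g sK).
  by split => [a|x] /=; [exact: fD_h0 | exact: fD_psi].
have hDg : dghom_comp_eq gD hD' (gA g sK).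
  by split => [a|x] /=; [exact: gD_h0 | exact: gD_psi].
exists (@CorrHomMk _ _ A (CorrMk fD gD) hD' hDf hDg); split.
  split => [a|x] /=.
    by rewrite /eta0 (h0_pi hf1 hg1 phiK psiK) (psi00 phiK) dgd0 addr0.
  exact: psi_hh.
move=> [h'' h''f h''g] [/= c0 c1]; split => [q|x] /=.
  rewrite -[q]reprK; set b := repr q; rewrite [RHS]/= (h0_pi hf1 hg1 phiK psiK) (pi_split sK) rmorphD c0 /=.
  congr (_ + _)%R; rewrite -hm_d; congr dgd.
  apply: esym; apply: psi_eq => //; [exact: h''f.2 | exact: h''g.2].
apply: esym; apply: psi_eq => //; [exact: h''f.2 | exact: h''g.2].
Qed.
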